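(* For every admissible $v>9$ (i.e. $v\equiv 1$ or $3 \pmod 6$, $v>9$) and every Steiner triple system $\mathcal{S}=\mathrm{STS}(v)$, the graph $G_0=0$-$\mathrm{BIG}(\mathcal{S})$ is not silver. (For $v=7$ and $v=9$, $0$-$\mathrm{BIG}(\mathrm{STS}(v))$ is totally silver.)
   Context: A Steiner triple system $\mathrm{STS}(v)$ is a set $V$ of $v$ elements with a collection of $3$-subsets (blocks) such that every pair of elements lies in exactly one block; it exists iff $v\equiv 1,3\pmod 6$. The $0$-block intersection graph $0$-$\mathrm{BIG}$ has the blocks as vertices, two blocks adjacent iff they are disjoint; it is a regular graph. An $\alpha$-set of a graph is a maximum independent set. Let $G$ be an $r$-regular graph and $c$ a proper $(r+1)$-coloring of $G$. A vertex $x$ is rainbow with respect to $c$ if every one of the $r+1$ colors appears on $N[x]=N(x)\cup\{x\}$. Given an $\alpha$-set $I$, $c$ is silver with respect to $I$ if every $x\in I$ is rainbow; $G$ is silver if it admits a silver coloring with respect to some $\alpha$-set; $G$ is totally silver if it admits a proper $(r+1)$-coloring in which every vertex is rainbow. *)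

(* Defs.v *)
From mathcomp Require Import all_boot.
Set Implicit Arguments. Unset Strict Implicit. Unset Printing Implicit Defensive.

Section Graphs.
Variable T : finType.
Variable e : rel T.

Definition nbhd (x : T) : {set T} := [set y | e x y].

Definition regular (r : nat) : Prop := forall x : T, #|nbhd x| = r.

Definition independent (I : {set T}) : Prop :=
  forall x y, x \in I -> y \in I -> ~~ e x y.

Definition alpha_set (I : {set T}) : Prop :=
  independent I /\ forall J : {set T}, independent J -> #|J| <= #|I|.

Definition proper_coloring (k : nat) (c : T -> 'I_k) : Prop :=
  forall x y, e x y -> c x != c y.

Definition rainbow (k : nat) (c : T -> 'I_k) (x : T) : Prop :=
  forall i : 'I_k, exists y, ((y == x) || e x y) && (c y == i).

Definition silver_coloring (r : nat) (I : {set T}) (c : T -> 'I_r.+1) : Prop :=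
  proper_coloring c /\ forall x, x \in I -> rainbow c x.

Definition silver : Prop :=
  exists r, regular r /\
    exists (I : {set T}) (c : T -> 'I_r.+1), alpha_set I /\ silver_coloring I c.

Definition totally_silver : Prop :=
  exists r, regular r /\
    exists c : T -> 'I_r.+1, proper_coloring c /\ forall x, rainbow c x.
End Graphs.

Definition is_STS (v : nat) (B : {set {set 'I_v}}) : Prop :=
  (forall b, b \in B -> #|b| = 3) /\
  (forall x y : 'I_v, x != y -> #|[set b in B | (x \in b) && (y \in b)]| = 1).

Definition zero_BIG (v : nat) (B : {set {set 'I_v}}) : rel {b : {set 'I_v} | b \in B} :=
  fun b1 b2 => [disjoint val b1 & val b2].
Arguments zero_BIG {v} B.
Arguments is_STS {v} B.
Arguments silver {T} e.
Arguments totally_silver {T} e.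

(* Main.v *)
Require Import Defs.
From mathcomp Require Import all_boot.
Set Implicit Arguments. Unset Strict Implicit. Unset Printing Implicit Defensive.

Section STS.
Variable v : nat.
Variable B : {set {set 'I_v}}.
Hypothesis HB : is_STS B.
Local Notation V := {b : {set 'I_v} | b \in B}.

Lemma card3 (X : V) : #|val X| = 3.
Proof. exact: HB.1 _ (valP X). Qed.

Lemma blk_uniq (X Y : V) (a w : 'I_v) : a != w -> a \in val X -> w \in val X ->
  a \in val Y -> w \in val Y -> X = Y.
Proof.
move=> aw aX wX aY wY; apply: val_inj.
have := HB.2 _ _ aw; move/eqP/cards1P => [b Hb].
have : val X \in [set b] by rewrite -Hb inE (valP X) aX wX.
have : val Y \in [set b] by rewrite -Hb inE (valP Y) aY wY.
by rewrite !inE => /eqP-> /eqP->.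
Qed.

Lemma blk_ex (a w : 'I_v) : a != w -> exists X : V, (a \in val X) && (w \in val X).
Proof.
move=> aw; have := HB.2 _ _ aw; move/eqP/cards1P => [b Hb].
have : b \in [set b0 in B | (a \in b0) && (w \in b0)] by rewrite Hb set11.
rewrite inE => /andP [bB /andP [ab wb]].
by exists (exist _ b bB); rewrite /= ab wb.
Qed.

Definition star (u : 'I_v) : {set V} := [set X : V | u \in val X].

Lemma sum_ind (T : finType) (A : {set T}) (P : pred T) :
  \sum_(X in A) (P X : nat) = #|[set X in A | P X]|.
Proof.
rewrite -sum1_card big_mkcond [RHS]big_mkcond /=.
by apply: eq_bigr => X _; rewrite !inE; case: (X \in A); case: (P X).
Qed.

Lemma dc (F : {set V}) (S : {set 'I_v}) :
  \sum_(u in S) #|F :&: star u| = \sum_(X in F) #|val X :&: S|.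
Proof.
transitivity (\sum_(u in S) \sum_(X in F) (u \in val X : nat)).
  apply: eq_bigr => u _; rewrite sum_ind; apply: eq_card => X; by rewrite !inE.
rewrite exchange_big; apply: eq_bigr => X _; rewrite sum_ind.
by apply: eq_card => u; rewrite !inE andbC.
Qed.

Lemma pair_le1 (F : {set V}) a w : a != w -> #|F :&: star a :&: star w| <= 1.
Proof.
move=> aw; apply/card_le1P => X; rewrite !inE => /andP [/andP [FX aX] wX] Y.
rewrite !inE; apply/idP/idP.
  by move=> /andP [/andP [_ aY] wY]; rewrite (blk_uniq aw aY wY aX wX).
by move/eqP=> ->; rewrite FX aX wX.
Qed.

Lemma pair_eq1 a w : a != w -> #|star a :&: star w| = 1.
Proof.
move=> aw; apply/eqP; rewrite eqn_leq; apply/andP; split.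
  by have := pair_le1 setT aw; rewrite setTI.
rewrite card_gt0; apply/set0Pn; have [X /andP [aX wX]] := blk_ex aw.
by exists X; rewrite !inE aX wX.
Qed.

Lemma star_card u : (#|star u|).*2 = v.-1.
Proof.
have := dc (star u) [set~ u].
have -> : \sum_(w in [set~ u]) #|star u :&: star w| = \sum_(w in [set~ u]) 1.
  by apply: eq_bigr => w; rewrite !inE eq_sym => /pair_eq1.
rewrite sum1_card cardsC1 card_ord => ->.
rewrite -muln2 -sum_nat_const; apply: eq_bigr => X; rewrite inE => uX.
have := cardsD1 u (val X); rewrite uX card3 -setDE => e.
by apply/eqP; rewrite -(eqn_add2l 1) -e.
Qed.

Definition meets (X Y : V) := ~~ [disjoint val X & val Y].

Lemma meetP (X Y : V) : reflect (exists w, (w \in val X) && (w \in val Y)) (meets X Y).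
Proof.
rewrite /meets -setI_eq0.
apply: (iffP (set0Pn _)) => [[w]|[w]] H; exists w; by rewrite ?inE in H *.
Qed.

Lemma meets_refl (X : V) : meets X X.
Proof.
apply/meetP; have : 0 < #|val X| by rewrite card3.
by rewrite card_gt0 => /set0Pn [w wX]; exists w; rewrite wX.
Qed.

Lemma meetsC (X Y : V) : meets X Y = meets Y X.
Proof. by rewrite /meets disjoint_sym. Qed.

Section Col.
Variable r : nat.
Variable I : {set V}.
Variable c : V -> 'I_r.+1.
Local Notation e := (zero_BIG B).
Hypothesis Hreg : regular e r.
Hypothesis Hind : independent e I.
Hypothesis Hprop : proper_coloring e c.
Hypothesis Hrain : forall x, x \in I -> rainbow e c x.

Lemma Imeet (x y : V) : x \in I -> y \in I -> meets x y.
Proof. exact: Hind. Qed.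

Lemma one (x : V) : x \in I -> forall z1 z2, (z1 == x) || e x z1 -> (z2 == x) || e x z2 ->
  c z1 = c z2 -> z1 = z2.
Proof.
move=> xI; set N := x |: nbhd e x.
have cN : #|N| = r.+1.
  rewrite cardsU1 Hreg inE; have := meets_refl x; rewrite /meets => ->; by [].
have im : #|c @: N| == #|N|.
  rewrite eqn_leq leq_imset_card cN /=.
  rewrite -{1}(card_ord r.+1) -cardsT; apply: subset_leq_card; apply/subsetP => i _.
  have [y /andP [Hy /eqP <-]] := Hrain xI i.
  by apply/imsetP; exists y => //; rewrite !inE.
move/imset_injP: im => inj z1 z2 h1 h2; apply: inj; by rewrite !inE.
Qed.

Lemma samecol (y yp : V) : c y = c yp -> meets y yp.
Proof. move=> h; apply/negP => d; have := Hprop d; by rewrite h eqxx. Qed.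

Lemma pairc (x y yp : V) : x \in I -> y != yp -> c y = c yp -> ~~ meets x y -> ~~ meets x yp -> False.
Proof.
move=> xI yyp h; rewrite /meets !negbK => m1 m2.
have := one xI (z1:=y) (z2:=yp); rewrite /zero_BIG m1 m2 !orbT => /(_ isT isT h) E.
by rewrite E eqxx in yyp.
Qed.



Lemma Ustep (x y : V) : x \in I -> y \notin I -> meets x y ->
  c x = c y \/ exists yp, [/\ yp \notin I, yp != y & c yp = c y].
Proof.
move=> xI yI mxy; have [z /andP [Hz /eqP cz]] := Hrain xI (c y).
case/orP: Hz => [/eqP zx | exz]; first by left; rewrite -zx.
right; exists z; split => //.
  apply/negP => zI; have := Imeet xI zI; move: exz; by rewrite /meets /zero_BIG => ->.
apply/eqP => zy; move: exz; rewrite zy /zero_BIG; by move/negP: mxy.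
Qed.

Lemma Mmain :
  (forall y yp, y \notin I -> yp \notin I -> y != yp -> meets y yp ->
     exists x, [/\ x \in I, ~~ meets x y & ~~ meets x yp]) ->
  (exists y1 y2 x0, [/\ y1 \notin I, y2 \notin I, y1 != y2 & [/\ x0 \in I, meets x0 y1 & meets x0 y2]]) ->
  False.
Proof.
move=> H1 [y1 [y2 [x0 [y1I y2I y12 [x0I m1 m2]]]]].
have key : forall y, y \notin I -> meets x0 y -> c x0 = c y.
  move=> y yI m; case: (Ustep x0I yI m) => // [[yp [ypI ypy cyp]]].
  have [x [xI n1 n2]] := H1 yp y ypI yI ypy (samecol cyp).
  by have := pairc xI ypy cyp n1 n2.
have c12 : c y1 = c y2 by rewrite -(key _ y1I m1) (key _ y2I m2).
have [x [xI n1 n2]] := H1 y1 y2 y1I y2I y12 (samecol c12).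
exact: pairc xI y12 c12 n1 n2.
Qed.
End Col.

Lemma Tbound (F : {set V}) (S : {set 'I_v}) k :
  (forall x, x \in F -> 0 < #|val x :&: S|) ->
  (forall w, w \in S -> #|F :&: star w| <= k) -> #|F| <= #|S| * k.
Proof.
move=> h1 h2; apply: (@leq_trans (\sum_(x in F) #|val x :&: S|)).
  by rewrite -sum1_card; apply: leq_sum.
by rewrite -dc -sum_nat_const; apply: leq_sum.
Qed.

Lemma avoid (I U : {set V}) : #|U| < #|I| -> exists x, x \in I /\ x \notin U.
Proof.
move=> h; have : ~~ (I \subset U).
  by apply/negP => /subset_leq_card; rewrite leqNgt h.
by case/subsetPn => x xI xU; exists x.
Qed.

Lemma star_le1 (F : {set V}) a w : a != w -> F \subset star a -> #|F :&: star w| <= 1.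
Proof.
move=> aw sF; rewrite -(pair_eq1 aw); apply: subset_leq_card; exact: setSI.
Qed.

Lemma star_indep u : independent (zero_BIG B) (star u).
Proof.
move=> x y; rewrite !inE => ux uy; apply/meetP; by exists u; rewrite ux uy.
Qed.

Definition Tset (I : {set V}) (y : V) := [set x in I | meets x y].

Section Alpha.
Variable I : {set V}.
Hypothesis Hind : independent (zero_BIG B) I.
Hypothesis Hmax : forall J, independent (zero_BIG B) J -> #|J| <= #|I|.
Hypothesis Hn6 : forall u, 6 <= #|star u|.

Section StarCase.
Variable p : 'I_v.
Hypothesis Hp : forall x, x \in I -> p \in val x.

Lemma IS : I = star p.
Proof.
apply/eqP; rewrite eqEcard Hmax ?andbT; last exact: star_indep.
by apply/subsetP => x xI; rewrite inE Hp.
Qed.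

Lemma star_H2 : exists y1 y2 x0, [/\ y1 \notin I, y2 \notin I, y1 != y2 &
   [/\ x0 \in I, meets x0 y1 & meets x0 y2]].
Proof.
have : 0 < #|I| by rewrite IS; apply: leq_trans (Hn6 p).
rewrite card_gt0 => /set0Pn [x0 x0I].
have : 0 < #|val x0 :\ p|.
  by have := cardsD1 p (val x0); rewrite Hp // card3 add1n => -[<-].
rewrite card_gt0 => /set0Pn [a]; rewrite !inE => /andP [ap ax0].
have h1 : #|star a :&: I| <= 1.
  by rewrite IS pair_eq1.
have : 1 < #|star a :\: I|.
  have := cardsID I (star a); have := Hn6 a.
  move=> h2 h3; rewrite -h3 in h2.
  have h4 := leq_trans h2 (leq_add h1 (leqnn #|star a :\: I|)).
  by rewrite add1n ltnS in h4; apply: leq_trans _ h4.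
case/card_gt1P => y1 [y2 []]; rewrite !inE => /andP [y1I ay1] /andP [y2I ay2] y12.
exists y1, y2, x0; split => //; split => //; apply/meetP; exists a; by rewrite ax0.
Qed.

Lemma star_H1 y yp : y \notin I -> yp \notin I -> y != yp -> meets y yp ->
     exists x, [/\ x \in I, ~~ meets x y & ~~ meets x yp].
Proof.
move=> yI ypI yyp /meetP [q /andP [qy qyp]].
have Tb : forall z, z \notin I -> #|Tset I z| <= 3.
  move=> z zI; have pz : p \notin val z.
    apply/negP => pz; move: zI; by rewrite IS inE pz.
  rewrite -(card3 z) -[#|val z|]muln1; apply: Tbound.
    move=> x; rewrite inE => /andP [_ /meetP [w wxz]]; rewrite card_gt0; apply/set0Pn; exists w; by rewrite inE.
  move=> w wz; apply: (@star_le1 _ p).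
    by apply/negP => /eqP pw; rewrite pw wz in pz.
  by rewrite -IS; apply/subsetP => x; rewrite inE => /andP [].
have pq : p != q by apply/negP => /eqP pq; move: yI; rewrite IS inE pq qy.
have [xq /andP [pxq qxq]] := blk_ex pq.
have xqI : xq \in I by rewrite IS inE.
have xqT : xq \in Tset I y :&: Tset I yp.
  rewrite !inE xqI /=; apply/andP; split; apply/meetP; exists q; by rewrite qxq.
have [x [xI xU]] : exists x, x \in I /\ x \notin Tset I y :|: Tset I yp.
  have hI : 6 <= #|I| by rewrite IS.
  apply: avoid; apply: leq_trans hI.
  have := cardsUI (Tset I y) (Tset I yp).
  have : 0 < #|Tset I y :&: Tset I yp| by rewrite card_gt0; apply/set0Pn; exists xq.
  have := Tb _ yI; have := Tb _ ypI. move=> a1 a2 a3 a4.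
  rewrite -(ltn_add2r #|Tset I y :&: Tset I yp|) a4.
  apply: (@leq_trans (3 + 3 + 1)); last by rewrite -[3+3+1]/(6+1) leq_add2l.
  by rewrite addn1 ltnS; apply: leq_add.
exists x; split => //.
  by apply/negP => m; move: xU; rewrite !inE xI m.
by apply/negP => m; move: xU; rewrite !inE xI m orbT.
Qed.
End StarCase.

Section NonStar.
Variable u0 : 'I_v.
Hypothesis Hns : forall p, exists X, X \in I /\ p \notin val X.

Lemma hI6 : 6 <= #|I|.
Proof. have h := Hmax (@star_indep u0). exact: leq_trans (Hn6 u0) h. Qed.

Lemma deg3 a : #|I :&: star a| <= 3.
Proof.
have [X [XI aX]] := Hns a.
rewrite -(card3 X) -[#|val X|]muln1; apply: Tbound.
  move=> x; rewrite inE => /andP [xI _]; have /meetP [w wxX] := Hind xI XI.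
  rewrite card_gt0; apply/set0Pn; exists w; by rewrite inE.
move=> w wX; apply: (@star_le1 _ a); last exact: subsetIr.
by apply/negP => /eqP aw; rewrite aw wX in aX.
Qed.

Lemma ns_H2 : exists y1 y2 x0, [/\ y1 \notin I, y2 \notin I, y1 != y2 &
   [/\ x0 \in I, meets x0 y1 & meets x0 y2]].
Proof.
have : 0 < #|I| by apply: leq_trans hI6.
rewrite card_gt0 => /set0Pn [x0 x0I].
have : 0 < #|val x0| by rewrite card3.
rewrite card_gt0 => /set0Pn [a ax0].
have h1 : #|star a :&: I| <= 3 by rewrite setIC deg3.
have : 1 < #|star a :\: I|.
  have h2 := Hn6 a; have h3 := cardsID I (star a); rewrite -h3 in h2.
  have h4 := leq_trans h2 (leq_add h1 (leqnn #|star a :\: I|)).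
  by rewrite -[6]/(3 + 3) leq_add2l in h4; apply: leq_trans _ h4.
case/card_gt1P => y1 [y2 []]; rewrite !inE => /andP [y1I ay1] /andP [y2I ay2] y12.
exists y1, y2, x0; split => //; split => //; apply/meetP; exists a; by rewrite ax0.
Qed.

Lemma ns_struct : exists a A B1 B2, [/\ A \in I, B1 \in I, B2 \in I &
   [/\ a \in val A, a \in val B1, a \in val B2 & [/\ A != B1, A != B2 & B1 != B2]]].
Proof.
have : 0 < #|I| by apply: leq_trans hI6.
rewrite card_gt0 => /set0Pn [A AI].
have hs := dc I (val A).
have : 3 + #|I|.-1 <= \sum_(X in I) #|val X :&: val A|.
  rewrite (bigD1 A) //= setIid card3 leq_add2l.
  have -> : #|I|.-1 = \sum_(X in I | X != A) 1.
    rewrite sum1_card (cardsD1 A I) AI add1n /=; apply: eq_card => X; by rewrite !inE andbC.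
  apply: leq_sum => X /andP [XI _]; have /meetP [w wXA] := Hind XI AI.
  rewrite card_gt0; apply/set0Pn; exists w; by rewrite inE.
rewrite -hs => hge.
case: (boolP [exists u in val A, 2 < #|I :&: star u|]); last first.
  rewrite negb_exists_in => /forall_inP hle.
  have : \sum_(u in val A) #|I :&: star u| <= 3 * 2.
    rewrite -(card3 A) -sum_nat_const; apply: leq_sum => u uA; by rewrite leqNgt hle.
  move=> h; have := leq_trans hge h; have := hI6.
  by case: #|I| => [|[|[|[|[|[|k]]]]]].
case/exists_inP => a aA ha.
have : 1 < #|(I :&: star a) :\ A|.
  have := cardsD1 A (I :&: star a); rewrite !inE AI aA /= add1n => e.
  by rewrite -ltnS -e.
case/card_gt1P => B1 [B2 []]; rewrite !inE => /andP [B1A /andP [B1I aB1]] /andP [B2A /andP [B2I aB2]] B12.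
exists a, A, B1, B2; split => //; split => //; split => //; by rewrite eq_sym.
Qed.


Section P7.
Variables (a : 'I_v) (A B1 B2 : V).
Hypotheses (AI : A \in I) (B1I : B1 \in I) (B2I : B2 \in I).
Hypotheses (aA : a \in val A) (aB1 : a \in val B1) (aB2 : a \in val B2).
Hypotheses (AB1 : A != B1) (AB2 : A != B2) (B12 : B1 != B2).

Definition P7 := val A :|: val B1 :|: val B2.

Lemma inter_a (X Y : V) : X != Y -> a \in val X -> a \in val Y -> val X :&: val Y = [set a].
Proof.
move=> XY aX aY; apply/setP => w; rewrite !inE; apply/idP/idP.
  move=> /andP [wX wY]; apply/negPn/negP => wa.
  have aw : a != w by rewrite eq_sym.
  by move: XY; rewrite (blk_uniq aw aX wX aY wY) eqxx.
by move/eqP->; rewrite aX aY.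
Qed.

Lemma P7card : #|P7| = 7.
Proof.
have h1 := cardsUI (val A) (val B1); rewrite inter_a // cards1 !card3 in h1.
have h2 := cardsUI (val A :|: val B1) (val B2).
rewrite setIUl !inter_a // setUid cards1 card3 in h2.
have e1 : #|val A :|: val B1| = 5 by apply/eqP; rewrite -(eqn_add2r 1) h1.
rewrite e1 in h2; apply/eqP; rewrite -(eqn_add2r 1) /P7 h2 //.
Qed.

Lemma card3s (T : finType) (x y z : T) : x != y -> x != z -> y != z -> #|[set x; y; z]| = 3.
Proof.
move=> xy xz yz; rewrite -setUA !cardsU1 cards1 !inE negb_or xy xz yz //.
Qed.

Lemma deg_a (X : V) : X \in I -> a \in val X -> [|| X == A, X == B1 | X == B2].
Proof.
move=> XI aX; apply/negPn/negP; rewrite !negb_or => /and3P [XA XB1 XB2].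
have : #|[set X; A; B1; B2]| <= #|I :&: star a|.
  apply: subset_leq_card; apply/subsetP => Y; rewrite !inE.
  by rewrite -!orbA => /or4P [] /eqP ->; rewrite ?XI ?AI ?B1I ?B2I ?aX ?aA ?aB1 ?aB2.
rewrite -!setUA cardsU1 setUA card3s // !inE !negb_or XA XB1 XB2 /=.
by move=> h; have := leq_trans h (deg3 a).
Qed.

Lemma inP7 (X : V) : X \in I -> val X \subset P7.
Proof.
move=> XI; case aX: (a \in val X).
  case/or3P: (deg_a XI aX) => /eqP ->; apply/subsetP => z zX; by rewrite /P7 !inE zX ?orbT.
have pick (Y : V) : Y \in I -> a \in val Y -> exists2 w, w \in val X & w \in val Y /\ w != a.
  move=> YI aY; have /meetP [w /andP [wX wY]] := Hind XI YI.
  exists w => //; split => //; by apply/negP => /eqP wa; rewrite -wa wX in aX.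
have [w1 w1X [w1A w1a]] := pick A AI aA.
have [w2 w2X [w2B w2a]] := pick B1 B1I aB1.
have [w3 w3X [w3B w3a]] := pick B2 B2I aB2.
have dif (Y Z : V) w w' : Y != Z -> a \in val Y -> a \in val Z -> w \in val Y -> w' \in val Z -> w != a -> w != w'.
  move=> YZ aY aZ wY wZ wa; apply/negP => /eqP ww; rewrite -ww in wZ.
  have aw : a != w by rewrite eq_sym.
  by move: YZ; rewrite (blk_uniq aw aY wY aZ wZ) eqxx.
have e : [set w1; w2; w3] = val X.
  apply/eqP; rewrite eqEcard card3 card3s; first (rewrite leqnn andbT; apply/subsetP => z; rewrite !inE).
  - by rewrite -!orbA => /or3P [] /eqP ->.
  - exact: (dif A B1).
  - exact: (dif A B2).
  - exact: (dif B1 B2).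
rewrite -e; apply/subsetP => z; rewrite /P7 !inE.
by rewrite -!orbA => /or3P [] /eqP ->; rewrite ?w1A ?w2B ?w3B ?orbT.
Qed.

Lemma sumdeg : \sum_(u in P7) #|I :&: star u| = 3 * #|I|.
Proof.
rewrite dc mulnC -sum_nat_const; apply: eq_bigr => X XI.
by rewrite (setIidPl (inP7 XI)) card3.
Qed.

Lemma Ile7 : #|I| <= 7.
Proof.
have : \sum_(u in P7) #|I :&: star u| <= 7 * 3.
  rewrite -P7card -sum_nat_const; apply: leq_sum => u _; exact: deg3.
by rewrite sumdeg mulnC leq_pmul2r.
Qed.


Definition W := [set X : V | #|val X :&: P7| == 1].

Lemma cW X : X \in W -> #|val X :&: ~: P7| = 2.
Proof.
rewrite inE => /eqP hX; have := cardsID P7 (val X); rewrite hX card3 setDE.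
by move/eqP; rewrite -[3]/(1+2) eqn_add2l => /eqP.
Qed.

Lemma Wle : #|W| <= 'C(#|~: P7|, 2).
Proof.
rewrite -cards_draws.
have inj : {in W &, injective (fun X : V => val X :&: ~: P7)}.
  move=> X Y XW YW /= e.
  have : 1 < #|val X :&: ~: P7| by rewrite cW.
  case/card_gt1P => w1 [w2 []] h1 h2 w12.
  have h1' := h1; have h2' := h2; rewrite e in h1' h2'.
  move: h1 h2 h1' h2'; rewrite !inE => /andP [w1X _] /andP [w2X _] /andP [w1Y _] /andP [w2Y _].
  exact: (blk_uniq w12).
rewrite -(card_in_imset inj); apply: subset_leq_card; apply/subsetP => s /imsetP [X XW ->].
by rewrite inE subsetIr cW.
Qed.

Lemma Wu u : u \in P7 -> #|star u| = 6 -> #|I :&: star u| <= #|W :&: star u|.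
Proof.
move=> uP hu; have hd := dc (star u) (P7 :\ u).
have L : \sum_(w in P7 :\ u) #|star u :&: star w| = 6.
  rewrite (eq_bigr (fun _ => 1)) ?sum1_card.
    by have := cardsD1 u P7; rewrite uP P7card add1n => -[<-].
  by move=> w; rewrite !inE => /andP [wu _]; rewrite pair_eq1 // eq_sym.
have R : #|star u :\: W| + #|star u :&: I| <= \sum_(X in star u) #|val X :&: (P7 :\ u)|.
  have -> : #|star u :\: W| = \sum_(X in star u) (X \notin W : nat).
    by rewrite sum_ind; apply: eq_card => X; rewrite !inE andbC.
  have -> : #|star u :&: I| = \sum_(X in star u) (X \in I : nat).
    by rewrite sum_ind; apply: eq_card => X; rewrite !inE andbC.
  rewrite -big_split /=; apply: leq_sum => X; rewrite inE => uX.
  have e1 : #|val X :&: P7| = (#|val X :&: (P7 :\ u)|).+1.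
    by rewrite setIDA (cardsD1 u (val X :&: P7)) in_setI uX uP.
  case XI: (X \in I).
    move: e1; rewrite (setIidPl (inP7 XI)) card3 => -[<-].
    by rewrite addn1 ltnS; case: (X \notin W).
  rewrite addn0 inE e1 eqSS; by case: #|_|.
rewrite -hd L in R.
have := cardsID W (star u); rewrite hu => e2.
rewrite -e2 [_ + _]addnC leq_add2r in R.
by rewrite setIC [W :&: _]setIC.
Qed.

Lemma v13_false : (forall u, #|star u| = 6) -> #|~: P7| = 6 -> False.
Proof.
move=> h6 hO.
have : 3 * #|I| <= #|W|.
  rewrite -sumdeg; apply: (@leq_trans (\sum_(u in P7) #|W :&: star u|)).
    by apply: leq_sum => u uP; apply: Wu.
  rewrite dc -sum1_card; apply: eq_leq; apply: eq_bigr => X; by rewrite inE => /eqP.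
move=> h; have := leq_trans h Wle; rewrite hO.
have := hI6; move: #|I| => k hk.
by rewrite -[X in _ <= X]/15; move=> h'; have := leq_trans (leq_mul (leqnn 3) hk) h'.
Qed.


Section V15.
Hypothesis HI7 : 7 <= #|I|.

Lemma P7D1 u : u \in P7 -> #|P7 :\ u| = 6.
Proof. by move=> uP; have := cardsD1 u P7; rewrite uP P7card add1n => -[<-]. Qed.

Lemma all3 u : u \in P7 -> #|I :&: star u| = 3.
Proof.
move=> uP; apply/eqP; rewrite eqn_leq deg3 /= leqNgt; apply/negP => lt.
have := sumdeg; rewrite (bigD1 u) //=.
have : \sum_(w | (w \in P7) && (w != u)) #|I :&: star w| <= 18.
  rewrite (eq_bigl (fun w => w \in P7 :\ u)); last by move=> w; rewrite !inE andbC.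
  apply: (@leq_trans (\sum_(w in P7 :\ u) 3)); first by apply: leq_sum => w _; exact: deg3.
  by rewrite sum_nat_const P7D1.
move=> h1 h2; have := leq_add lt h1; rewrite addSn h2 => h3.
by have := leq_ltn_trans (leq_mul (leqnn 3) HI7) h3.
Qed.

Lemma cov u w : u \in P7 -> w \in P7 -> u != w -> exists X, [/\ X \in I, u \in val X & w \in val X].
Proof.
move=> uP wP uw.
have hd := dc (I :&: star u) (P7 :\ u).
have R : \sum_(X in I :&: star u) #|val X :&: (P7 :\ u)| = 6.
  rewrite (eq_bigr (fun _ => 2)); first by rewrite sum_nat_const all3.
  move=> X; rewrite !inE => /andP [XI uX].
  rewrite setIDA (setIidPl (inP7 XI)); have := cardsD1 u (val X); rewrite uX card3 add1n.
  by move=> -[<-].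
rewrite R in hd.
have : 0 < #|I :&: star u :&: star w|.
  rewrite lt0n; apply/negP => /eqP h0.
  move: hd; rewrite (bigD1 w) /=; last by rewrite in_setD1 eq_sym uw wP.
  rewrite h0 add0n.
  have : \sum_(i | (i \in P7 :\ u) && (i != w)) #|I :&: star u :&: star i| <= 5.
    rewrite (eq_bigl (fun i => i \in (P7 :\ u) :\ w)); last by move=> i; rewrite [RHS]in_setD1 andbC.
    apply: (@leq_trans (\sum_(i in (P7 :\ u) :\ w) 1)).
      apply: leq_sum => i; rewrite !inE => /andP [iw /andP [iu _]].
      by apply: (@star_le1 _ u); [rewrite eq_sym | exact: subsetIr].
    rewrite sum1_card; have := cardsD1 w (P7 :\ u); rewrite P7D1 // in_setD1 eq_sym uw wP add1n.
    by move=> -[<-].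
  by move=> h e; rewrite e in h.
rewrite card_gt0 => /set0Pn [X]; rewrite !inE => /andP [/andP [XI uX] wX].
by exists X.
Qed.

Lemma yP7 y : y \notin I -> #|val y :&: P7| <= 1.
Proof.
move=> yI; rewrite leqNgt; apply/negP => /card_gt1P [z [z' []]].
rewrite !in_setI => /andP [zy zP] /andP [z'y z'P] zz'.
have [X [XI zX z'X]] := cov zP z'P zz'.
by move: yI; rewrite -(blk_uniq zz' zX z'X zy z'y) XI.
Qed.

Lemma Tb15 y : y \notin I -> #|Tset I y| <= 3.
Proof.
move=> yI; apply: (@leq_trans (#|val y :&: P7| * 3)); last by have := yP7 yI; case: #|_| => [|[|]].
apply: Tbound.
  move=> x; rewrite inE => /andP [xI /meetP [w /andP [wx wy]]].
  rewrite card_gt0; apply/set0Pn; exists w; rewrite !in_setI wx wy /=.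
  exact: (subsetP (inP7 xI)).
move=> w _; apply: leq_trans (deg3 w); apply: subset_leq_card; apply: setSI.
by apply/subsetP => x; rewrite inE => /andP [].
Qed.

Lemma v15_H1 y yp : y \notin I -> yp \notin I -> y != yp -> meets y yp ->
     exists x, [/\ x \in I, ~~ meets x y & ~~ meets x yp].
Proof.
move=> yI ypI _ _.
have [x [xI xU]] : exists x, x \in I /\ x \notin Tset I y :|: Tset I yp.
  apply: avoid; apply: leq_trans HI7; rewrite ltnS.
  apply: leq_trans (leq_card_setU _ _) _.
  exact: (leq_add (Tb15 yI) (Tb15 ypI)).
exists x; split => //.
  by apply/negP => m; move: xU; rewrite !inE xI m.
by apply/negP => m; move: xU; rewrite !inE xI m orbT.
Qed.

End V15.
End P7.
End NonStar.
End Alpha.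
End STS.

Lemma vcase v : (v %% 6 = 1 \/ v %% 6 = 3) -> 9 < v -> [\/ v = 13, v = 15 | 19 <= v].
Proof.
move=> Ha Hv; case: (ltnP v 19) => [lt|]; last by constructor 3.
have : v \in [seq k <- iota 0 19 | (9 < k) && ((k %% 6 == 1) || (k %% 6 == 3))].
  rewrite mem_filter mem_iota lt Hv /=; by case: Ha => ->.
by rewrite /= !inE => /orP [] /eqP ->; [constructor 1 | constructor 2].
Qed.

Lemma arN n v : n.*2 = v.-1 -> [\/ v = 13, v = 15 | 19 <= v] ->
  [/\ 5 < n, v = 13 -> n = 6, v = 15 -> n = 7 & 19 <= v -> 8 < n].
Proof.
move=> e; case=> h.
- have hn : n = 6 by rewrite -(doubleK n) e h.
  by rewrite hn h; split => // /eqP.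
- have hn : n = 7 by rewrite -(doubleK n) e h.
  by rewrite hn h; split => // /eqP.
- have h8 : 8 < n by rewrite -ltn_double e; case: v e h => // v1 _ h; by rewrite /= ltnS in h; apply: leq_trans h.
  split => // [|h'|h']; first by apply: leq_trans h8.
  + by rewrite h' in h.
  + by rewrite h' in h.
Qed.

Theorem theorem8 (v : nat) (Hadm : v %% 6 = 1 \/ v %% 6 = 3) (Hv : 9 < v)
  (B : {set {set 'I_v}}) (HB : is_STS B) :
  ~ silver (zero_BIG B).
Proof.
move=> [r [Hreg [I [c [[Hind Hmax] [Hprop Hrain]]]]]].
have Hn := star_card HB.
have u0 : 'I_v := Ordinal (leq_trans (isT : 0 < 10) Hv).
have vc := @vcase v Hadm Hv.
have HN u := @arN _ _ (Hn u) vc.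
have Hn6 : forall u, 5 < #|star B u| by move=> u; case: (HN u).
case: (boolP [exists p, [forall x in I, p \in val x]]).
  case/existsP => p /forall_inP Hp.
  exact: (Mmain HB Hreg Hind Hprop Hrain (star_H1 HB Hmax Hn6 Hp) (star_H2 HB Hmax Hn6 Hp)).
rewrite negb_exists => /forallP Hns'.
have Hns : forall p, exists X, X \in I /\ p \notin val X.
  move=> p; have := Hns' p; rewrite negb_forall_in => /exists_inP [X XI pX]; by exists X.
have [a [A [B1 [B2 [AI B1I B2I [aA aB1 aB2 [AB1 AB2 B12]]]]]]] := ns_struct HB Hind Hmax Hn6 u0.
have hIn := Hmax _ (@star_indep _ _ u0).
case: vc => [v13 | v15 | v19].
- apply: (v13_false HB Hind Hmax Hn6 u0 Hns AI B1I B2I aA aB1 aB2 AB1 AB2 B12).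
    by move=> u; case: (HN u) => _ h _ _; apply: h.
  have h7 := P7card HB aA aB1 aB2 AB1 AB2 B12.
  have hh := cardsC (P7 A B1 B2); rewrite h7 card_ord in hh.
  by apply/eqP; rewrite -(eqn_add2l 7) hh v13.
- have HI7 : 6 < #|I|.
    apply: leq_trans hIn; case: (HN u0) => _ _ h _; by rewrite h.
  exact: (Mmain HB Hreg Hind Hprop Hrain (v15_H1 HB Hind Hns AI B1I B2I aA aB1 aB2 AB1 AB2 B12 HI7) (ns_H2 HB Hind Hmax Hn6 u0 Hns)).
- have h2 := Ile7 HB Hind Hns AI B1I B2I aA aB1 aB2 AB1 AB2 B12.
  have h1 : 8 < #|star B u0| by case: (HN u0) => _ _ _; apply.
  by have := leq_trans (leq_trans h1 hIn) h2.
Qed.
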